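(* Fix $Y$, $q>0$, $\delta>0$, $\rho\in\mathbb R$, and let $(a^*(\beta),b^*(\beta))$ be the selected pair as a function of $\beta\in(0,1)$. Then: 1. If $\psi_Y'(0+)+q\rho<0$, then for all $\beta<1$ sufficiently close to $1$ one has $0<a^*(\beta)<b^*(\beta)$ and $Z^{(q)}(b^*(\beta)-a^*(\beta))=\beta^{-1}$. In particular, $b^*(\beta)-a^*(\beta)\to0$ as $\beta\uparrow1$. 2. If $\psi_Y'(0+)+q\rho>0$, then $a^*(\beta)=b^*(\beta)=0$ for all $\beta<1$ sufficiently close to $1$. 3. If $\psi_Y'(0+)+q\rho=0$ and $\psi_X'(0+)>0$, then $b^*(\beta)>0$ for every $\beta\in(0,1)$, and $a^*(\beta)\to0$ and $b^*(\beta)\to0$ as $\beta\uparrow1$. 4. If $\psi_Y'(0+)+q\rho=0$ and $\psi_X'(0+)\le0$, then $a^*(\beta)=b^*(\beta)=0$ for all $\beta\in(0,1)$.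
   Context: Let $Y$ be a spectrally positive Lévy process (not a subordinator) with Laplace exponent $\psi_Y(\theta)=\log\mathbb E[e^{-\theta Y_1}]$ and $\mathbb E[Y_1]=-\psi_Y'(0+)<\infty$. Let $q>0$, $\delta>0$, and $\psi_X(\theta)=\psi_Y(\theta)+\delta\theta$ (so $\psi_X'(0+)=\psi_Y'(0+)+\delta$). The scale functions $\mathbb W^{(q)},W^{(q)}$ vanish on $(-\infty,0)$, are continuous and strictly increasing on $[0,\infty)$, and have Laplace transforms $1/(\psi_Y(\theta)-q)$ and $1/(\psi_X(\theta)-q)$. Let $\mathbb Z^{(q)}(x)=1+q\int_0^x\mathbb W^{(q)}$, $Z^{(q)}(x)=1+q\int_0^xW^{(q)}$, $\overline Z^{(q)}(x)=\int_0^xZ^{(q)}$, and $R^{(q)}(z)=\overline Z^{(q)}(z)+\psi_X'(0+)/q$. Let $\tilde r^{(q)}_c(z)=R^{(q)}(z)+\delta\int_c^z\mathbb W^{(q)}(z-y)Z^{(q)}(y)\,dy$. For $\beta\in(0,1)$ and $\rho\in\mathbb R$, let $\Gamma(a,b)=\delta\mathbb Z^{(q)}(a)-q\rho-q\beta\tilde r^{(q)}_{b-a}(b)$ for $0\le a\le b$. Selected pair: if $\Gamma(0,0)=\delta-q\rho-\beta\psi_X'(0+)\le0$, then $a^*=b^*=0$. Otherwise, $b^*>0$ is the unique root of $\min_{0\le a\le b^*}\Gamma(a,b^* )=0$, and $a^*$ is the unique minimizer of $a\mapsto\Gamma(a,b^* )$ on $[0,b^*]$. *)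

(* Defs.v *)
From Stdlib Require Import Reals Lra ClassicalEpsilon.
Open Scope R_scope.

(* Riemann integral of f over [a,b] (signed, as Stdlib's RiemannInt); the value
   is independent of the integrability proof (RiemannInt_P5).  If f is not
   Riemann integrable on [a,b], the value is junk (0); it is only used where
   integrability holds. *)
Definition RInt (f : R -> R) (a b : R) : R :=
  match excluded_middle_informative (inhabited (Riemann_integrable f a b)) with
  | left H => RiemannInt (epsilon H (fun _ => True))
  | right _ => 0
  end.

Definition ImpInt0 (f : R -> R) (L : R) : Prop :=
  (forall a b, 0 < a -> a <= b -> inhabited (Riemann_integrable f a b)) /\
  (forall eps, 0 < eps -> exists d, 0 < d /\ exists M, 0 < M /\
     forall a b, 0 < a -> a < d -> M < b -> Rabs (RInt f a b - L) < eps).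

(* The value of the improper integral (junk 0 if it does not exist). *)
Definition ImpVal0 (f : R -> R) : R :=
  epsilon (inhabits 0) (fun L => ImpInt0 f L).

(* A spectrally positive Levy process Y with E[Y_1] finite is described by its
   Levy--Khintchine triplet: a coefficient c = -E[Y_1], a Gaussian coefficient
   s = sigma^2 >= 0, and a Levy measure Pi on (0,oo), represented by its tail
   Pbar(x) = Pi((x,oo)), x > 0.  Conditions: Pbar is nonnegative, nonincreasing,
   right-continuous, vanishes at +oo, and int_0^oo min(x,1) Pbar(x) dx < oo,
   which is equivalent to int (x^2 /\ x) Pi(dx) < oo (Levy measure with finite
   first moment of large jumps). *)
Definition LevyTriplet (c s : R) (Pbar : R -> R) : Prop :=
  0 <= s /\
  (forall x, 0 < x -> 0 <= Pbar x) /\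
  (forall x y, 0 < x -> x <= y -> Pbar y <= Pbar x) /\
  (forall x, 0 < x -> forall eps, 0 < eps -> exists d, 0 < d /\
      forall y, x <= y < x + d -> Rabs (Pbar y - Pbar x) < eps) /\
  (forall eps, 0 < eps -> exists M, forall x, M < x -> Pbar x < eps) /\
  (exists L, ImpInt0 (fun x => Rmin x 1 * Pbar x) L).

(* Laplace exponent psi_Y(theta) = log E[exp(-theta Y_1)]
     = c theta + s theta^2/2 + int_(0,oo) (e^{-theta x} - 1 + theta x) Pi(dx),
   where the jump integral is written (integration by parts against the tail)
   as int_0^oo theta (1 - e^{-theta x}) Pbar(x) dx.  Used for theta >= 0. *)
Definition psiY (c s : R) (Pbar : R -> R) (theta : R) : R :=
  c * theta + s * theta ^ 2 / 2 +
  ImpVal0 (fun x => theta * (1 - exp (- (theta * x))) * Pbar x).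

(* Y is a subordinator iff s = 0, int x Pi(dx) = int_0^oo Pbar < oo and the
   drift -(c + int x Pi(dx)) is >= 0. *)
Definition NotSubordinator (c s : R) (Pbar : R -> R) : Prop :=
  ~ (s = 0 /\ exists L, ImpInt0 Pbar L /\ c + L <= 0).

Definition RightDeriv0 (f : R -> R) (m : R) : Prop :=
  forall eps, 0 < eps -> exists d, 0 < d /\
    forall h, 0 < h < d -> Rabs ((f h - f 0) / h - m) < eps.

Definition ScaleFun (psi : R -> R) (q : R) (W : R -> R) : Prop :=
  (forall x, x < 0 -> W x = 0) /\
  (forall x, 0 <= x -> forall eps, 0 < eps -> exists d, 0 < d /\
      forall y, 0 <= y -> Rabs (y - x) < d -> Rabs (W y - W x) < eps) /\
  (forall x y, 0 <= x -> x < y -> W x < W y) /\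
  (exists theta0, forall theta, theta0 < theta ->
      ImpInt0 (fun x => exp (- (theta * x)) * W x) (1 / (psi theta - q))).

Definition Zq (W : R -> R) (q x : R) : R := 1 + q * RInt W 0 x.

Definition Zbarq (W : R -> R) (q x : R) : R := RInt (fun y => Zq W q y) 0 x.

(* R^(q)(z) = Zbar^(q)(z) + psi_X'(0+)/q *)
Definition Rq (W : R -> R) (q dX z : R) : R := Zbarq W q z + dX / q.

Definition rtilde (WW W : R -> R) (q delta dX c z : R) : R :=
  Rq W q dX z + delta * RInt (fun y => WW (z - y) * Zq W q y) c z.

Definition Gamma (WW W : R -> R) (q delta rho dX beta a b : R) : R :=
  delta * Zq WW q a - q * rho - q * beta * rtilde WW W q delta dX (b - a) b.

(* b is a root of b |-> min_{0<=a<=b} G(a,b) = 0 *)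
Definition MinZero (G : R -> R -> R) (b : R) : Prop :=
  (exists a0, 0 <= a0 <= b /\ G a0 b = 0) /\
  (forall a, 0 <= a <= b -> 0 <= G a b).

Definition Selected (G : R -> R -> R) (a b : R) : Prop :=
  (G 0 0 <= 0 /\ a = 0 /\ b = 0) \/
  (0 < G 0 0 /\ 0 < b /\ MinZero G b /\
   (forall b', 0 < b' -> MinZero G b' -> b' = b) /\
   0 <= a <= b /\
   (forall a', 0 <= a' <= b -> G a b <= G a' b) /\
   (forall a', 0 <= a' <= b -> (forall a'', 0 <= a'' <= b -> G a' b <= G a'' b) ->
      a' = a)).

Definition TendsTo0At1 (f : R -> R) : Prop :=
  forall eps, 0 < eps -> exists eta, 0 < eta /\
    forall beta, 1 - eta < beta < 1 -> Rabs (f beta) < eps.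

Definition NearOne (P : R -> Prop) : Prop :=
  exists beta0, 0 < beta0 < 1 /\ forall beta, beta0 < beta < 1 -> P beta.

(* Main.v *)
Require Import Defs.
From Stdlib Require Import Reals Lra Lia ClassicalEpsilon RList FunctionalExtensionality Classical.
From Coquelicot Require Coquelicot.
Open Scope R_scope.

Lemma IsStepFun_ext : forall f g a b, a <= b ->
  (forall x, a < x < b -> f x = g x) -> IsStepFun f a b -> IsStepFun g a b.
Proof.
  intros f g a b Hab Hfg [l [lf H]].
  exists l; exists lf.
  destruct H as (H1 & H2 & H3 & H4 & H5).
  unfold adapted_couple; repeat split; auto.
  intros i Hi x Hx.
  rewrite <- (H5 i Hi x Hx). symmetry; apply Hfg.
  unfold open_interval in Hx.
  assert (Ha : pos_Rl l 0 <= pos_Rl l i).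
  { apply RList_P5; auto. apply RList_P3. exists i; split; auto. lia. }
  assert (Hb : pos_Rl l (S i) <= pos_Rl l (pred (length l))).
  { apply RList_P7; auto. apply RList_P3. exists (S i); split; auto. lia. }
  rewrite H2 in Ha; rewrite H3 in Hb.
  rewrite Rmin_left in Ha by lra. rewrite Rmax_right in Hb by lra. lra.
Qed.

Lemma SF_int_ext : forall a b (f g : StepFun a b), a <= b ->
  (forall x, a < x < b -> f x = g x) -> RiemannInt_SF f = RiemannInt_SF g.
Proof.
  intros a b f g Hab H. apply Rle_antisym; apply StepFun_P37; auto;
  intros x Hx; rewrite (H x Hx); lra.
Qed.

Lemma SF_int_ge0 : forall a b (f : StepFun a b), a <= b ->
  (forall x, a < x < b -> 0 <= f x) -> 0 <= RiemannInt_SF f.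
Proof.
  intros a b f Hab H.
  replace 0 with (RiemannInt_SF (mkStepFun (StepFun_P4 a b 0))).
  - apply StepFun_P37; auto.
  - rewrite StepFun_P18; ring.
Qed.

Definition glue (m : R) (f g : R -> R) := fun t => if Rle_dec t m then f t else g t.

Lemma glue_SF : forall a m b (p1 : StepFun a m) (p2 : StepFun m b), a <= m -> m <= b ->
  { p : StepFun a b | (forall t, p t = glue m p1 p2 t) /\
     RiemannInt_SF p = RiemannInt_SF p1 + RiemannInt_SF p2 }.
Proof.
  intros a m b p1 p2 Ham Hmb.
  assert (S1 : IsStepFun (glue m p1 p2) a m).
  { apply (IsStepFun_ext (fe p1)); auto.
    - intros x Hx; unfold glue; destruct (Rle_dec x m); auto; lra.
    - apply pre. }
  assert (S2 : IsStepFun (glue m p1 p2) m b).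
  { apply (IsStepFun_ext (fe p2)); auto.
    - intros x Hx; unfold glue; destruct (Rle_dec x m); auto; lra.
    - apply pre. }
  exists (mkStepFun (StepFun_P41 Ham Hmb S1 S2)). split.
  - intros; reflexivity.
  - rewrite <- (StepFun_P43 S1 S2 (StepFun_P41 Ham Hmb S1 S2)).
    f_equal; apply SF_int_ext; auto; intros x Hx; simpl; unfold glue;
    destruct (Rle_dec x m); auto; lra.
Qed.

Definition nonincr_on (f : R -> R) a b :=
  forall x y, a <= x -> x <= y -> y <= b -> f y <= f x.

Lemma mono_SF : forall f h, 0 < h -> forall (N : nat) a b,
  b = a + INR (S N) * h -> nonincr_on f a b ->
  { phi : StepFun a b & { psi : StepFun a b |
     (forall t, a <= t <= b -> Rabs (f t - phi t) <= psi t) /\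
     RiemannInt_SF psi <= h * (f a - f b) } }.
Proof.
  intros f h Hh N. induction N as [|N IH]; intros a b Hb Hf.
  - exists (mkStepFun (StepFun_P4 a b (f a))).
    exists (mkStepFun (StepFun_P4 a b (f a - f b))).
    simpl in Hb. split.
    + intros t Ht; simpl; unfold fct_cte.
      assert (f t <= f a) by (apply Hf; lra).
      assert (f b <= f t) by (apply Hf; lra).
      rewrite Rabs_left1; lra.
    + rewrite StepFun_P18. rewrite Hb. right; ring.
  - set (m := a + h).
    assert (Hm : b = m + INR (S N) * h).
    { rewrite Hb; unfold m; rewrite !S_INR; ring. }
    assert (HN : 0 <= INR (S N) * h).
    { apply Rmult_le_pos; [apply pos_INR | lra]. }
    assert (Hf2 : nonincr_on f m b).
    { intros x y Hx Hxy Hy; apply Hf; unfold m in *; lra. }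
    destruct (IH m b Hm Hf2) as [phi2 [psi2 [P1 P2]]].
    assert (Hf1 : nonincr_on f a m).
    { intros x y Hx Hxy Hy; apply Hf; unfold m in *; lra. }
    set (phi1 := mkStepFun (StepFun_P4 a m (f a))).
    set (psi1 := mkStepFun (StepFun_P4 a m (f a - f m))).
    assert (Ham : a <= m) by (unfold m; lra).
    assert (Hmb : m <= b) by lra.
    destruct (glue_SF _ _ _ phi1 phi2 Ham Hmb) as [phi [E1 _]].
    destruct (glue_SF _ _ _ psi1 psi2 Ham Hmb) as [psi [E2 E3]].
    exists phi; exists psi; split.
    + intros t Ht. rewrite E1, E2; unfold glue.
      destruct (Rle_dec t m).
      * simpl; unfold fct_cte.
        assert (f t <= f a) by (apply Hf; lra).
        assert (f m <= f t) by (apply Hf1; lra).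
        rewrite Rabs_left1; lra.
      * apply P1; lra.
    + rewrite E3. unfold psi1. rewrite StepFun_P18.
      replace (m - a) with h by (unfold m; ring). nra.
Qed.

Lemma nonincr_integrable : forall f a b, a <= b -> nonincr_on f a b ->
  Riemann_integrable f a b.
Proof.
  intros f a b Hab Hf.
  destruct (Req_EM_T a b) as [E|Hne].
  { subst; apply RiemannInt_P7. }
  assert (Hlt : a < b) by lra.
  intro eps.
  assert (Hfd : 0 <= f a - f b) by (assert (f b <= f a) by (apply Hf; lra); lra).
  assert (Hex : exists N : nat, (b - a) * (f a - f b) / eps < INR (S N)).
  { destruct (INR_unbounded ((b - a) * (f a - f b) / eps)) as [n Hn].
    exists n; rewrite S_INR; lra. }
  apply constructive_indefinite_description in Hex. destruct Hex as [N HN].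
  assert (HSN : 0 < INR (S N)) by (apply lt_0_INR; lia).
  set (h := (b - a) / INR (S N)).
  assert (Hh : 0 < h) by (unfold h; apply Rdiv_lt_0_compat; lra).
  assert (Hb : b = a + INR (S N) * h) by (unfold h; field; lra).
  destruct (mono_SF f h Hh N a b Hb Hf) as [phi [psi [P1 P2]]].
  exists phi; exists psi. split.
  - intros t Ht. rewrite Rmin_left in Ht by lra. rewrite Rmax_right in Ht by lra. auto.
  - assert (0 <= RiemannInt_SF psi).
    { apply SF_int_ge0; [lra|]. intros x Hx.
      apply Rle_trans with (Rabs (f x - phi x)); [apply Rabs_pos | apply P1; lra]. }
    rewrite Rabs_right by lra.
    apply Rle_lt_trans with (h * (f a - f b)); auto.
    unfold h. pose proof (cond_pos eps).
    apply Rmult_lt_reg_r with (INR (S N)); auto.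
    replace ((b - a) / INR (S N) * (f a - f b) * INR (S N)) with ((b-a)*(f a - f b)) by (field; lra).
    apply Rmult_lt_reg_l with (/ eps). apply Rinv_0_lt_compat; lra.
    replace (/ eps * (eps * INR (S N))) with (INR (S N)) by (field; lra).
    replace (/ eps * ((b - a) * (f a - f b))) with ((b - a) * (f a - f b) / eps) by (field; lra).
    auto.
Qed.

Definition nondecr_on (f : R -> R) a b :=
  forall x y, a <= x -> x <= y -> y <= b -> f x <= f y.

Lemma nondecr_integrable : forall f a b, a <= b -> nondecr_on f a b ->
  Riemann_integrable f a b.
Proof.
  intros f a b Hab Hf.
  assert (H : Riemann_integrable (fun x => - f x) a b).
  { apply nonincr_integrable; auto. intros x y ? ? ?. pose proof (Hf x y). lra. }
  apply (@Riemann_integrable_ext (fun x => -1 * (- f x)) f a b).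
  - intros; ring.
  - apply Riemann_integrable_scal; auto.
Qed.

Lemma RInt_pr : forall f a b (pr : Riemann_integrable f a b), RInt f a b = RiemannInt pr.
Proof.
  intros. unfold RInt. destruct (excluded_middle_informative _) as [H|H].
  - apply RiemannInt_P5.
  - exfalso; apply H; constructor; exact pr.
Qed.
Arguments RInt_pr {f a b}.

Lemma RInt_aa : forall f a, RInt f a a = 0.
Proof. intros. rewrite (RInt_pr (RiemannInt_P7 f a)). apply RiemannInt_P9. Qed.

Lemma RInt_chasles : forall f a b c, Riemann_integrable f a b -> Riemann_integrable f b c ->
  RInt f a b + RInt f b c = RInt f a c.
Proof.
  intros f a b c p1 p2. rewrite (RInt_pr p1), (RInt_pr p2), (RInt_pr (RiemannInt_P24 p1 p2)).
  apply RiemannInt_P26.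
Qed.

Lemma RInt_le : forall f g a b, a <= b -> Riemann_integrable f a b -> Riemann_integrable g a b ->
  (forall x, a < x < b -> f x <= g x) -> RInt f a b <= RInt g a b.
Proof.
  intros f g a b Hab p1 p2 H. rewrite (RInt_pr p1), (RInt_pr p2). apply RiemannInt_P19; auto.
Qed.

Definition Riemann_integrable_const c a b : Riemann_integrable (fun _ => c) a b :=
  RiemannInt_P14 a b c.

Lemma RInt_const : forall c a b, RInt (fun _ => c) a b = c * (b - a).
Proof.
  intros. rewrite (RInt_pr (Riemann_integrable_const c a b)). apply RiemannInt_P15.
Qed.

Lemma RInt_lower : forall f a b l, a <= b -> Riemann_integrable f a b ->
  (forall x, a < x < b -> l <= f x) -> l * (b - a) <= RInt f a b.
Proof.
  intros. rewrite <- RInt_const. apply RInt_le; auto. apply Riemann_integrable_const.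
Qed.

Lemma RInt_upper : forall f a b u, a <= b -> Riemann_integrable f a b ->
  (forall x, a < x < b -> f x <= u) -> RInt f a b <= u * (b - a).
Proof.
  intros. rewrite <- RInt_const. apply RInt_le; auto. apply Riemann_integrable_const.
Qed.

Lemma RInt_ge0 : forall f a b, a <= b -> Riemann_integrable f a b ->
  (forall x, a < x < b -> 0 <= f x) -> 0 <= RInt f a b.
Proof.
  intros. replace 0 with (0 * (b - a)) by ring. apply RInt_lower; auto.
Qed.

Lemma RInt_lin : forall f g a b l, Riemann_integrable f a b -> Riemann_integrable g a b ->
  RInt (fun x => f x + l * g x) a b = RInt f a b + l * RInt g a b.
Proof.
  intros f g a b l p1 p2. rewrite (RInt_pr p1), (RInt_pr p2),
    (RInt_pr (RiemannInt_P10 l p1 p2)). apply RiemannInt_P13.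
Qed.

Lemma Riemann_integrable_plus : forall f g a b, Riemann_integrable f a b -> Riemann_integrable g a b ->
  Riemann_integrable (fun x => f x + g x) a b.
Proof.
  intros f g a b p1 p2.
  replace (fun x => f x + g x) with (fun x => f x + 1 * g x)
    by (apply functional_extensionality; intros; ring).
  apply RiemannInt_P10; auto.
Qed.

Lemma Riemann_integrable_minus : forall f g a b, Riemann_integrable f a b -> Riemann_integrable g a b ->
  Riemann_integrable (fun x => f x - g x) a b.
Proof.
  intros f g a b p1 p2.
  replace (fun x => f x - g x) with (fun x => f x + (-1) * g x)
    by (apply functional_extensionality; intros; ring).
  apply RiemannInt_P10; auto.
Qed.

Lemma Riemann_integrable_scal' : forall f a b c, Riemann_integrable f a b ->
  Riemann_integrable (fun x => c * f x) a b.
Proof.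
  intros f a b c p1.
  replace (fun x => c * f x) with (fun x => (fun _ => 0) x + c * f x)
    by (apply functional_extensionality; intros; ring).
  apply RiemannInt_P10; auto. apply Riemann_integrable_const.
Qed.

Lemma RInt_plus : forall f g a b, Riemann_integrable f a b -> Riemann_integrable g a b ->
  RInt (fun x => f x + g x) a b = RInt f a b + RInt g a b.
Proof.
  intros f g a b p1 p2.
  replace (fun x => f x + g x) with (fun x => f x + 1 * g x)
    by (apply functional_extensionality; intros; ring).
  rewrite RInt_lin; auto; ring.
Qed.

Lemma RInt_minus : forall f g a b, Riemann_integrable f a b -> Riemann_integrable g a b ->
  RInt (fun x => f x - g x) a b = RInt f a b - RInt g a b.
Proof.
  intros f g a b p1 p2.
  replace (fun x => f x - g x) with (fun x => f x + (-1) * g x)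
    by (apply functional_extensionality; intros; ring).
  rewrite RInt_lin; auto; ring.
Qed.

Lemma RInt_scal : forall f a b c, Riemann_integrable f a b ->
  RInt (fun x => c * f x) a b = c * RInt f a b.
Proof.
  intros f a b c p1.
  replace (fun x => c * f x) with (fun x => (fun _ => 0) x + c * f x)
    by (apply functional_extensionality; intros; ring).
  rewrite RInt_lin; auto. rewrite RInt_const; ring. apply Riemann_integrable_const.
Qed.

Lemma RInt_ext : forall f g a b, a <= b -> (forall x, a <= x <= b -> f x = g x) ->
  RInt f a b = RInt g a b.
Proof.
  intros f g a b Hab H. unfold RInt.
  destruct (excluded_middle_informative (inhabited (Riemann_integrable f a b))) as [H1|H1];
  destruct (excluded_middle_informative (inhabited (Riemann_integrable g a b))) as [H2|H2].
  - apply RiemannInt_P18; auto. intros x Hx. apply H; lra.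
  - exfalso; apply H2. destruct H1 as [p]. constructor.
    apply (@Riemann_integrable_ext f g a b); auto. intros x Hx. rewrite Rmin_left in Hx by lra.
    rewrite Rmax_right in Hx by lra. auto.
  - exfalso; apply H1. destruct H2 as [p]. constructor.
    apply (@Riemann_integrable_ext g f a b); auto. intros x Hx. rewrite Rmin_left in Hx by lra.
    rewrite Rmax_right in Hx by lra. symmetry; auto.
  - reflexivity.
Qed.

Lemma int_ext : forall f g a b, a <= b -> (forall x, a <= x <= b -> f x = g x) ->
  Riemann_integrable f a b -> Riemann_integrable g a b.
Proof.
  intros f g a b Hab H p. apply (@Riemann_integrable_ext f g a b); auto.
  intros x Hx. rewrite Rmin_left in Hx by lra. rewrite Rmax_right in Hx by lra. auto.
Qed.

Lemma int_sub : forall f a b c d, a <= c -> c <= d -> d <= b ->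
  Riemann_integrable f a b -> Riemann_integrable f c d.
Proof.
  intros f a b c d H1 H2 H3 p.
  apply (RiemannInt_P22 (b := b)); [apply (RiemannInt_P23 (a := a)); auto; lra | lra].
Qed.

Lemma prod_int1 : forall f g a b, a <= b -> nonincr_on f a b -> nondecr_on g a b ->
  (forall x, a <= x <= b -> 0 <= f x) -> (forall x, a <= x <= b -> 0 <= g x) ->
  Riemann_integrable (fun x => f x * g x) a b.
Proof.
  intros f g a b Hab Hf Hg Hf0 Hg0.
  assert (P1 : Riemann_integrable f a b) by (apply nonincr_integrable; auto).
  assert (P2 : Riemann_integrable (fun x => f x * (g b - g x)) a b).
  { apply nonincr_integrable; auto. intros x y Hx Hxy Hy.
    pose proof (Hf x y Hx Hxy Hy). pose proof (Hg x y Hx Hxy Hy).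
    pose proof (Hg y b ltac:(lra) Hy (Rle_refl b)).
    pose proof (Hf0 y ltac:(lra)). pose proof (Hf0 x ltac:(lra)).
    apply Rmult_le_compat; lra. }
  apply (int_ext (fun x => g b * f x - f x * (g b - g x))); auto.
  - intros; ring.
  - apply Riemann_integrable_minus; auto. apply Riemann_integrable_scal'; auto.
Qed.

Lemma prod_int2 : forall f g a b, a <= b -> nondecr_on f a b -> nonincr_on g a b ->
  (forall x, a <= x <= b -> 0 <= f x) -> (forall x, a <= x <= b -> 0 <= g x) ->
  Riemann_integrable (fun x => f x * g x) a b.
Proof.
  intros. apply (int_ext (fun x => g x * f x)); auto. intros; ring.
  apply prod_int1; auto.
Qed.

Lemma ImpInt0_unique : forall f L1 L2, ImpInt0 f L1 -> ImpInt0 f L2 -> L1 = L2.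
Proof.
  intros f L1 L2 [_ H1] [_ H2].
  apply Rminus_diag_uniq. destruct (Req_dec (L1 - L2) 0) as [Hz|Hz]; [exact Hz|].
  exfalso. assert (Hp : 0 < Rabs (L1 - L2)) by (apply Rabs_pos_lt; auto). set (e := Rabs (L1 - L2) / 2).
  assert (He : 0 < e) by (unfold e; lra).
  destruct (H1 e He) as [d1 [Hd1 [M1 [HM1 P1]]]].
  destruct (H2 e He) as [d2 [Hd2 [M2 [HM2 P2]]]].
  set (a := Rmin d1 d2 / 2). set (b := Rmax M1 M2 + 1).
  assert (Ha : 0 < a) by (unfold a; pose proof (Rmin_glb_lt d1 d2 0 Hd1 Hd2); lra).
  assert (Ha1 : a < d1) by (unfold a; pose proof (Rmin_l d1 d2); pose proof (Rmin_glb_lt d1 d2 0 Hd1 Hd2); lra).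
  assert (Ha2 : a < d2) by (unfold a; pose proof (Rmin_r d1 d2); pose proof (Rmin_glb_lt d1 d2 0 Hd1 Hd2); lra).
  assert (Hb1 : M1 < b) by (unfold b; pose proof (Rmax_l M1 M2); lra).
  assert (Hb2 : M2 < b) by (unfold b; pose proof (Rmax_r M1 M2); lra).
  specialize (P1 a b Ha Ha1 Hb1). specialize (P2 a b Ha Ha2 Hb2).
  assert (Rabs (L1 - L2) <= Rabs (RInt f a b - L2) + Rabs (RInt f a b - L1)).
  { replace (L1 - L2) with ((RInt f a b - L2) - (RInt f a b - L1)) by ring.
    eapply Rle_trans; [apply Rabs_triang|]. rewrite Rabs_Ropp. lra. }
  unfold e in *. lra.
Qed.

Lemma ImpVal0_eq : forall f L, ImpInt0 f L -> ImpVal0 f = L.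
Proof.
  intros f L H. unfold ImpVal0.
  apply (ImpInt0_unique f). 2: exact H.
  apply epsilon_spec. exists L; exact H.
Qed.

Lemma RInt_mono_dom : forall f a b a' b', 0 < a' -> a' <= a -> a <= b -> b <= b' ->
  (forall a b, 0 < a -> a <= b -> inhabited (Riemann_integrable f a b)) ->
  (forall x, 0 < x -> 0 <= f x) -> RInt f a b <= RInt f a' b'.
Proof.
  intros f a b a' b' H0 H1 H2 H3 Hi Hp.
  destruct (Hi a' a H0 H1) as [p1]. destruct (Hi a b ltac:(lra) H2) as [p2].
  destruct (Hi b b' ltac:(lra) H3) as [p3].
  rewrite <- (RInt_chasles f a' a b' p1 (RiemannInt_P24 p2 p3)).
  rewrite <- (RInt_chasles f a b b' p2 p3).
  assert (0 <= RInt f a' a) by (apply RInt_ge0; auto; intros; apply Hp; lra).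
  assert (0 <= RInt f b b') by (apply RInt_ge0; auto; intros; apply Hp; lra).
  lra.
Qed.

Lemma ImpInt0_le : forall f L, (forall x, 0 < x -> 0 <= f x) -> ImpInt0 f L ->
  forall a b, 0 < a -> a <= b -> RInt f a b <= L.
Proof.
  intros f L Hp [Hi Hc] a b Ha Hab.
  apply Rnot_lt_le; intro Hlt.
  set (e := RInt f a b - L).
  destruct (Hc e ltac:(unfold e; lra)) as [d [Hd [M [HM P]]]].
  set (a' := Rmin a (d/2)). set (b' := Rmax b (M + 1)).
  assert (Ha' : 0 < a') by (unfold a'; apply Rmin_glb_lt; lra).
  assert (Ha'1 : a' <= a) by apply Rmin_l.
  assert (Ha'2 : a' < d) by (unfold a'; pose proof (Rmin_r a (d/2)); lra).
  assert (Hb'1 : b <= b') by apply Rmax_l.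
  assert (Hb'2 : M < b') by (unfold b'; pose proof (Rmax_r b (M+1)); lra).
  specialize (P a' b' Ha' Ha'2 Hb'2).
  pose proof (RInt_mono_dom f a b a' b' Ha' Ha'1 Hab Hb'1 Hi Hp).
  apply Rabs_def2 in P. unfold e in *. lra.
Qed.

Lemma sup_lemma : forall f,
  (forall a b, 0 < a -> a <= b -> inhabited (Riemann_integrable f a b)) ->
  (forall x, 0 < x -> 0 <= f x) ->
  (exists B, forall a b, 0 < a -> a <= b -> RInt f a b <= B) ->
  exists L, ImpInt0 f L.
Proof.
  intros f Hi Hp [B HB].
  set (E := fun y => exists a b, 0 < a /\ a <= b /\ y = RInt f a b).
  assert (Hb : bound E) by (exists B; intros y [a [b [Ha [Hab ->]]]]; auto).
  assert (He : exists y, E y) by (exists (RInt f 1 1); exists 1, 1; repeat split; lra).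
  destruct (completeness E Hb He) as [L [HL1 HL2]].
  exists L. split; auto.
  intros eps Heps.
  assert (Hex : exists a b, 0 < a /\ a <= b /\ L - eps < RInt f a b).
  { apply NNPP; intro Hn.
    assert (is_upper_bound E (L - eps)).
    { intros y [a [b [Ha [Hab ->]]]]. apply Rnot_lt_le; intro; apply Hn; exists a, b; auto. }
    specialize (HL2 _ H); lra. }
  destruct Hex as [a0 [b0 [Ha0 [Hab0 Hl]]]].
  exists a0; split; auto. exists (Rmax b0 1); split.
  { pose proof (Rmax_r b0 1); lra. }
  intros a b Ha Had Hmb.
  assert (Hb0 : b0 <= b) by (pose proof (Rmax_l b0 1); lra).
  assert (RInt f a0 b0 <= RInt f a b) by (apply RInt_mono_dom; auto; lra).
  assert (RInt f a b <= L) by (apply HL1; exists a, b; repeat split; lra).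
  apply Rabs_def1; lra.
Qed.

Module CQ.
Import Coquelicot.Coquelicot.

Lemma exp_int_aux : forall t a b, 0 < t -> a <= b ->
  { pr : Riemann_integrable (fun x => exp (- (t * x))) a b |
    RiemannInt pr = (exp (- (t * a)) - exp (- (t * b))) / t }.
Proof.
  intros t a b Ht Hab.
  assert (HD : is_RInt (fun x => exp (- (t * x))) a b
     (minus ((fun x => - exp (- (t * x)) / t) b) ((fun x => - exp (- (t * x)) / t) a))).
  { apply (is_RInt_derive (fun x => - exp (- (t * x)) / t)).
    - intros x _. auto_derive; auto. field. lra.
    - intros x _. apply continuity_pt_filterlim. reg. }
  assert (Hex : ex_RInt (fun x => exp (- (t * x))) a b) by (eexists; exact HD).
  exists (ex_RInt_Reals_0 _ _ _ Hex).
  rewrite <- RInt_Reals. rewrite (is_RInt_unique _ _ _ _ HD).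
  unfold minus, plus, opp; simpl. field. lra.
Qed.
End CQ.

Lemma exp_integrable : forall t a b, 0 < t -> a <= b ->
  Riemann_integrable (fun x => exp (- (t * x))) a b.
Proof. intros. destruct (CQ.exp_int_aux t a b); auto. Qed.

Lemma exp_RInt : forall t a b, 0 < t -> a <= b ->
  RInt (fun x => exp (- (t * x))) a b = (exp (- (t * a)) - exp (- (t * b))) / t.
Proof.
  intros. destruct (CQ.exp_int_aux t a b) as [pr Hpr]; auto. rewrite (RInt_pr pr). auto.
Qed.

Lemma exp_le_mono : forall x y, x <= y -> exp x <= exp y.
Proof. intros x y H. destruct (Req_dec x y); [subst; lra|]. left; apply exp_increasing; lra. Qed.

Lemma exp_gt_id : forall y, y < exp y.
Proof. intros. pose proof (exp_ineq1_le y). lra. Qed.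

Lemma div_nonneg_or_zero : forall x, 0 <= x -> 0 <= 1 / x.
Proof.
  intros x Hx. destruct (Req_dec x 0) as [->|Hn].
  - unfold Rdiv; rewrite Rinv_0; lra.
  - unfold Rdiv; rewrite Rmult_1_l; left; apply Rinv_0_lt_compat; lra.
Qed.

Lemma scale_W0 : forall psi q W, ScaleFun psi q W ->
  (forall T, exists th, T < th /\ q <= psi th) -> 0 <= W 0.
Proof.
  intros psi q W [Hneg [Hcont [Hinc [th0 Hlap]]]] Hpsi.
  apply Rnot_lt_le; intro Hw0. set (w := - W 0).
  assert (Hw : 0 < w) by (unfold w; lra).
  destruct (Hcont 0 (Rle_refl 0) (w/2) ltac:(lra)) as [d [Hd Hdc]].
  set (eps := d / 2).
  assert (Heps : 0 < eps) by (unfold eps; lra).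
  assert (HW1 : forall y, 0 <= y <= eps -> W y <= - w / 2).
  { intros y Hy. assert (Rabs (y - 0) < d) by (rewrite Rminus_0_r, Rabs_right; unfold eps in *; lra).
    specialize (Hdc y ltac:(lra) H). apply Rabs_def2 in Hdc. unfold w in *; lra. }
  assert (HW2 : forall y, 0 <= y -> - w <= W y).
  { intros y Hy. destruct (Req_dec y 0) as [->|Hn]; [unfold w; lra|].
    pose proof (Hinc 0 y (Rle_refl 0) ltac:(lra)). unfold w; lra. }
  set (th1 := Rmax th0 0 + 1).
  assert (Hth1a : th0 < th1) by (unfold th1; pose proof (Rmax_l th0 0); lra).
  assert (Hth1b : 0 < th1) by (unfold th1; pose proof (Rmax_r th0 0); lra).
  destruct (Hlap th1 Hth1a) as [Hi1 Hc1].
  set (L1 := 1 / (psi th1 - q)).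
  set (G := fun x => exp (- (th1 * x)) * W x + w * exp (- (th1 * x))).
  assert (HG0 : forall x, 0 < x -> 0 <= G x).
  { intros x Hx. unfold G. pose proof (exp_pos (- (th1 * x))). pose proof (HW2 x ltac:(lra)). nra. }
  assert (HGi : forall a b, 0 < a -> a <= b -> inhabited (Riemann_integrable G a b)).
  { intros a b Ha Hab. destruct (Hi1 a b Ha Hab) as [p]. constructor.
    apply Riemann_integrable_plus; auto. apply Riemann_integrable_scal'.
    apply exp_integrable; auto. }
  set (K := L1 + 1 + w / th1).
  assert (HK : forall b, eps <= b -> RInt G eps b <= K).
  { intros b Hb. destruct (Hc1 1 ltac:(lra)) as [d1 [Hd1 [M1 [HM1 P1]]]].
    set (a' := Rmin (d1/2) eps). set (B' := Rmax b (M1 + 1)).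
    assert (Ha'0 : 0 < a') by (unfold a'; apply Rmin_glb_lt; lra).
    assert (Ha'1 : a' <= eps) by apply Rmin_r.
    assert (Ha'2 : a' < d1) by (unfold a'; pose proof (Rmin_l (d1/2) eps); lra).
    assert (HB'1 : b <= B') by apply Rmax_l.
    assert (HB'2 : M1 < B') by (unfold B'; pose proof (Rmax_r b (M1+1)); lra).
    assert (Hm : RInt G eps b <= RInt G a' B') by (apply RInt_mono_dom; auto; lra).
    specialize (P1 a' B' Ha'0 Ha'2 HB'2). apply Rabs_def2 in P1.
    destruct (Hi1 a' B' Ha'0 ltac:(lra)) as [p].
    assert (Hx : RInt G a' B' = RInt (fun x => exp (- (th1 * x)) * W x) a' B' +
                  w * RInt (fun x => exp (- (th1 * x))) a' B').
    { unfold G. rewrite RInt_plus; auto.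
      - rewrite RInt_scal; auto. apply exp_integrable; auto; lra.
      - apply Riemann_integrable_scal'. apply exp_integrable; auto; lra. }
    rewrite exp_RInt in Hx by lra.
    assert (exp (- (th1 * a')) <= 1).
    { rewrite <- exp_0. apply exp_le_mono. nra. }
    pose proof (exp_pos (- (th1 * B'))).
    assert ((exp (- (th1 * a')) - exp (- (th1 * B'))) / th1 <= 1 / th1).
    { unfold Rdiv. apply Rmult_le_compat_r; [left; apply Rinv_0_lt_compat; lra | lra]. }
    assert (w * ((exp (- (th1 * a')) - exp (- (th1 * B'))) / th1) <= w * (1 / th1))
      by (apply Rmult_le_compat_l; lra).
    unfold K, L1. unfold Rdiv in *. lra. }
  set (K' := Rmax K 0).
  assert (HK' : forall b, eps <= b -> RInt G eps b <= K').
  { intros. pose proof (Rmax_l K 0). pose proof (HK b H). unfold K'; lra. }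
  assert (HK'0 : 0 <= K') by apply Rmax_r.
  set (T := th1 + 32 * K' * exp (th1 * eps) / (w * eps ^ 2)).
  assert (HT : th1 <= T).
  { unfold T. assert (0 <= 32 * K' * exp (th1 * eps) / (w * eps ^ 2)); [|lra].
    unfold Rdiv. apply Rmult_le_pos; [apply Rmult_le_pos; [lra| left; apply exp_pos]|].
    left; apply Rinv_0_lt_compat. apply Rmult_lt_0_compat; [lra | apply pow_lt; lra]. }
  destruct (Hpsi T) as [th [HthT Hq]].
  assert (HF : 0 <= 1 / (psi th - q)) by (apply div_nonneg_or_zero; lra).
  assert (Hth0 : th0 < th) by lra.
  destruct (Hlap th Hth0) as [Hi Hc].
  set (gam := w * eps / 16 * exp (- (th * eps / 2))).
  assert (Hgam : 0 < gam) by (unfold gam; pose proof (exp_pos (- (th * eps / 2))); 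
     apply Rmult_lt_0_compat; [nra|auto]).
  set (gt := fun x => exp (- (th * x)) * W x).
  assert (Hclaim : forall a b, 0 < a -> a <= eps / 4 -> eps <= b -> RInt gt a b <= - gam).
  { intros a b Ha Ha4 Hb.
    destruct (Hi a (eps/2) Ha ltac:(lra)) as [p1].
    destruct (Hi (eps/2) eps ltac:(lra) ltac:(lra)) as [p2].
    destruct (Hi eps b ltac:(lra) Hb) as [p3].
    destruct (HGi eps b ltac:(lra) Hb) as [pG].
    rewrite <- (RInt_chasles gt a eps b (RiemannInt_P24 p1 p2) p3).
    rewrite <- (RInt_chasles gt a (eps/2) eps p1 p2).
    assert (I1 : RInt gt a (eps/2) <= (- (w/2) * exp (- (th * (eps/2))))* (eps/2 - a)).
    { apply RInt_upper; auto; [lra|]. intros x Hx. unfold gt.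
      assert (exp (- (th * (eps/2))) <= exp (- (th * x))) by (apply exp_le_mono; nra).
      pose proof (HW1 x ltac:(lra)). pose proof (exp_pos (- (th * (eps/2)))). nra. }
    assert (I2 : RInt gt (eps/2) eps <= 0 * (eps - eps/2)).
    { apply RInt_upper; auto; [lra|]. intros x Hx. unfold gt.
      pose proof (HW1 x ltac:(lra)). pose proof (exp_pos (- (th * x))). nra. }
    set (k := exp (- ((th - th1) * eps))).
    assert (I3 : RInt gt eps b <= RInt (fun x => k * G x) eps b).
    { apply RInt_le; auto. apply Riemann_integrable_scal'; auto.
      intros x Hx. unfold gt, G.
      assert (E : exp (- (th * x)) = exp (- (th1 * x)) * exp (- ((th - th1) * x))).
      { rewrite <- exp_plus. f_equal; ring. }
      assert (Hk : exp (- ((th - th1) * x)) <= k) by (unfold k; apply exp_le_mono; nra).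
      pose proof (exp_pos (- (th1 * x))). pose proof (exp_pos (- ((th - th1) * x))).
      pose proof (HW2 x ltac:(lra)).
      rewrite E. destruct (Rle_lt_dec 0 (W x)).
      - assert (exp (- (th1 * x)) * exp (- ((th - th1) * x)) * W x <=
                exp (- (th1 * x)) * k * W x).
        { apply Rmult_le_compat_r; auto. apply Rmult_le_compat_l; lra. }
        assert (0 < k) by (unfold k; apply exp_pos).
        assert (0 <= k * (w * exp (- (th1 * x)))) by (apply Rmult_le_pos; [lra|apply Rmult_le_pos; lra]).
        nra.
      - assert (0 < k) by (unfold k; apply exp_pos).
        assert (0 <= k * (exp (- (th1 * x)) * W x + w * exp (- (th1 * x)))).
        { apply Rmult_le_pos; [lra|]. nra. }
        assert (exp (- (th1 * x)) * exp (- ((th - th1) * x)) * W x <= 0).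
        { assert (0 < exp (- (th1 * x)) * exp (- ((th - th1) * x))) by (apply Rmult_lt_0_compat; lra). nra. }
        lra. }
    rewrite RInt_scal in I3 by auto.
    pose proof (HK' b Hb).
    assert (Hk0 : 0 < k) by (unfold k; apply exp_pos).
    assert (I4 : k * K' <= gam).
    { unfold k, gam.
      assert (E : exp (- ((th - th1) * eps)) = exp (th1 * eps) * exp (- (th * eps / 2)) * exp (- (th * eps / 2))).
      { rewrite <- !exp_plus. f_equal; field. }
      rewrite E.
      assert (H1 : K' * exp (th1 * eps) <= w * eps / 16 * exp (th * eps / 2)).
      { assert (Q1 : th * eps / 2 < exp (th * eps / 2)) by apply exp_gt_id.
        assert (Q2 : 32 * K' * exp (th1 * eps) / (w * eps ^ 2) <= th) by (unfold T in HthT; lra).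
        assert (Hwe : 0 < w * eps ^ 2) by (apply Rmult_lt_0_compat; [lra | apply pow_lt; lra]).
        assert (Q3 : 32 * K' * exp (th1 * eps) <= th * (w * eps ^ 2)).
        { apply (Rmult_le_compat_r (w * eps ^ 2)) in Q2; [|lra].
          unfold Rdiv in Q2. rewrite Rmult_assoc, Rinv_l in Q2 by lra. lra. }
        assert (Q4 : w * eps / 16 * (th * eps / 2) <= w * eps / 16 * exp (th * eps / 2)).
        { assert (0 < w * eps) by (apply Rmult_lt_0_compat; lra).
          apply Rmult_le_compat_l; [|lra]. unfold Rdiv; left; apply Rmult_lt_0_compat; lra. }
        replace (w * eps / 16 * (th * eps / 2)) with (th * (w * eps ^ 2) / 32) in Q4 by field.
        lra. }
      assert (Einv : exp (th * eps / 2) * exp (- (th * eps / 2)) = 1).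
      { rewrite <- exp_plus. replace (th * eps / 2 + - (th * eps / 2)) with 0 by ring. apply exp_0. }
      pose proof (exp_pos (- (th * eps / 2))).
      assert (H3 : K' * exp (th1 * eps) * exp (- (th * eps / 2)) <= w * eps / 16 * exp (th * eps / 2) * exp (- (th * eps / 2))).
      { apply Rmult_le_compat_r; lra. }
      replace (w * eps / 16 * exp (th * eps / 2) * exp (- (th * eps / 2))) with (w * eps / 16) in H3
        by (rewrite Rmult_assoc, Einv; ring).
      assert (Hfin : K' * exp (th1 * eps) * exp (- (th * eps / 2)) * exp (- (th * eps / 2)) <= w * eps / 16 * exp (- (th * eps / 2)))
        by (apply Rmult_le_compat_r; lra).
      lra. }
    assert (Ee : exp (- (th * (eps / 2))) = exp (- (th * eps / 2))) by (f_equal; field).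
    assert (Ep : 0 < exp (- (th * (eps / 2)))) by apply exp_pos.
    assert (I1' : (- (w/2) * exp (- (th * (eps/2))))* (eps/2 - a) <= - (2 * gam)).
    { unfold gam. rewrite Ee. rewrite Ee in Ep.
      assert (0 <= w * exp (- (th * eps / 2)) * (eps / 4 - a)).
      { apply Rmult_le_pos; [apply Rmult_le_pos; lra|lra]. }
      replace ((- (w/2) * exp (- (th * eps / 2)))* (eps/2 - a)) with
        (- (w * exp (- (th * eps / 2)) * eps / 8) - w * exp (- (th * eps / 2)) * (eps / 4 - a) / 2) by field.
      replace (- (2 * (w * eps / 16 * exp (- (th * eps / 2))))) with (- (w * exp (- (th * eps / 2)) * eps / 8)) by field.
      lra. }
    assert (k * RInt G eps b <= k * K') by (apply Rmult_le_compat_l; lra).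
    lra. }
  destruct (Hc (gam/2) ltac:(lra)) as [d2 [Hd2 [M2 [HM2 P2]]]].
  set (a := Rmin (d2/2) (eps/4)). set (b := Rmax (M2 + 1) eps).
  assert (Ha0 : 0 < a) by (unfold a; apply Rmin_glb_lt; lra).
  assert (Ha1 : a <= eps/4) by apply Rmin_r.
  assert (Ha2 : a < d2) by (unfold a; pose proof (Rmin_l (d2/2) (eps/4)); lra).
  assert (Hb1 : eps <= b) by apply Rmax_r.
  assert (Hb2 : M2 < b) by (unfold b; pose proof (Rmax_l (M2+1) eps); lra).
  specialize (P2 a b Ha0 Ha2 Hb2). apply Rabs_def2 in P2.
  specialize (Hclaim a b Ha0 Ha1 Hb1). unfold gt in Hclaim. lra.
Qed.

Ltac fsolve := field; repeat split; try (apply Rgt_not_eq; lra); try (apply Rmult_integral_contrapositive_currified; apply Rgt_not_eq; lra).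

Section Psi.
Variables (c s : R) (Pbar : R -> R).
Hypothesis HL : LevyTriplet c s Pbar.

Lemma Pbar_nonneg : forall x, 0 < x -> 0 <= Pbar x.
Proof. destruct HL as (_ & H & _); auto. Qed.

Lemma Pbar_int : forall a b, 0 < a -> a <= b -> Riemann_integrable Pbar a b.
Proof.
  intros a b Ha Hab. apply nonincr_integrable; auto.
  intros x y Hx Hxy Hy. destruct HL as (_ & _ & H & _). apply H; lra.
Qed.

Definition jf (th : R) := fun x => th * (1 - exp (- (th * x))) * Pbar x.

Lemma jf_int : forall th a b, 0 < th -> 0 < a -> a <= b -> Riemann_integrable (jf th) a b.
Proof.
  intros th a b Hth Ha Hab. unfold jf.
  apply (prod_int2 (fun x => th * (1 - exp (- (th * x)))) Pbar); auto.
  - intros x y Hx Hxy Hy. apply Rmult_le_compat_l; [lra|].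
    assert (exp (- (th * y)) <= exp (- (th * x))) by (apply exp_le_mono; nra). lra.
  - intros x y Hx Hxy Hy. destruct HL as (_ & _ & H & _). apply H; lra.
  - intros x Hx. apply Rmult_le_pos; [lra|].
    assert (exp (- (th * x)) <= 1) by (rewrite <- exp_0; apply exp_le_mono; nra). lra.
  - intros; apply Pbar_nonneg; lra.
Qed.

Lemma jf_nonneg : forall th x, 0 < th -> 0 < x -> 0 <= jf th x.
Proof.
  intros th x Hth Hx. unfold jf. apply Rmult_le_pos; [apply Rmult_le_pos; [lra|]|apply Pbar_nonneg; auto].
  assert (exp (- (th * x)) <= 1) by (rewrite <- exp_0; apply exp_le_mono; nra). lra.
Qed.

Lemma jf_dom : forall th x, 0 < th -> 0 < x ->
  jf th x <= th * Rmax th 1 * (Rmin x 1 * Pbar x).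
Proof.
  intros th x Hth Hx. unfold jf.
  assert (H1 : 1 - exp (- (th * x)) <= Rmax th 1 * Rmin x 1).
  { pose proof (exp_ineq1_le (- (th * x))). pose proof (exp_pos (- (th * x))).
    pose proof (Rmax_l th 1). pose proof (Rmax_r th 1).
    destruct (Rle_dec x 1).
    - rewrite Rmin_left by lra. nra.
    - rewrite Rmin_right by lra. lra. }
  pose proof (Pbar_nonneg x Hx).
  assert (th * (1 - exp (- (th * x))) <= th * (Rmax th 1 * Rmin x 1)) by (apply Rmult_le_compat_l; lra).
  assert (th * (1 - exp (- (th * x))) * Pbar x <= th * (Rmax th 1 * Rmin x 1) * Pbar x)
    by (apply Rmult_le_compat_r; lra).
  lra.
Qed.

Lemma jf_imp : forall th, 0 < th -> exists J, ImpInt0 (jf th) J.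
Proof.
  intros th Hth.
  destruct HL as (_ & _ & _ & _ & _ & [Lg HLg]).
  assert (Hg0 : forall x, 0 < x -> 0 <= Rmin x 1 * Pbar x).
  { intros. apply Rmult_le_pos; [apply Rmin_glb; lra | apply Pbar_nonneg; auto]. }
  pose proof (ImpInt0_le _ _ Hg0 HLg) as HgB.
  apply sup_lemma.
  - intros a b Ha Hab. constructor. apply jf_int; auto.
  - intros. apply jf_nonneg; auto.
  - exists (th * Rmax th 1 * Lg). intros a b Ha Hab.
    destruct HLg as [Hgi _]. destruct (Hgi a b Ha Hab) as [pg].
    apply Rle_trans with (RInt (fun x => th * Rmax th 1 * (Rmin x 1 * Pbar x)) a b).
    + apply RInt_le; auto. apply jf_int; auto. apply Riemann_integrable_scal'; auto.
      intros; apply jf_dom; lra.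
    + rewrite RInt_scal; auto. apply Rmult_le_compat_l.
      * pose proof (Rmax_r th 1). apply Rmult_le_pos; lra.
      * apply HgB; auto.
Qed.

Lemma psi_lower : forall th a b, 0 < th -> 0 < a -> a <= b ->
  c * th + s * th ^ 2 / 2 + th * (1 - exp (- (th * a))) * RInt Pbar a b <= psiY c s Pbar th.
Proof.
  intros th a b Hth Ha Hab. unfold psiY.
  destruct (jf_imp th Hth) as [J HJ].
  change (fun x => th * (1 - exp (- (th * x))) * Pbar x) with (jf th).
  rewrite (ImpVal0_eq _ _ HJ).
  assert (H1 : RInt (jf th) a b <= J).
  { apply (ImpInt0_le (jf th)); auto. intros; apply jf_nonneg; auto. }
  assert (H2 : th * (1 - exp (- (th * a))) * RInt Pbar a b <= RInt (jf th) a b).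
  { rewrite <- RInt_scal by (apply Pbar_int; auto).
    apply RInt_le; auto.
    - apply Riemann_integrable_scal'; apply Pbar_int; auto.
    - apply jf_int; auto.
    - intros x Hx. unfold jf. apply Rmult_le_compat_r; [apply Pbar_nonneg; lra|].
      apply Rmult_le_compat_l; [lra|].
      assert (exp (- (th * x)) <= exp (- (th * a))) by (apply exp_le_mono; nra). lra. }
  lra.
Qed.

Hypothesis HNS : NotSubordinator c s Pbar.

Lemma exists_pos_mass : s = 0 -> exists a b, 0 < a /\ a <= b /\ 0 < c + RInt Pbar a b.
Proof.
  intros Hs.
  destruct (classic (exists B, forall a b, 0 < a -> a <= b -> RInt Pbar a b <= B)) as [HB|HB].
  - destruct (sup_lemma Pbar) as [L HLim]; auto.
    + intros; constructor; apply Pbar_int; auto.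
    + apply Pbar_nonneg.
    + assert (HcL : 0 < c + L).
      { apply Rnot_le_lt; intro Hle. apply HNS. split; auto. exists L; auto. }
      destruct HLim as [_ Hc].
      destruct (Hc ((c + L)/2) ltac:(lra)) as [d [Hd [M [HM P]]]].
      exists (d/2), (Rmax (M+1) (d/2)).
      pose proof (Rmax_l (M+1) (d/2)). pose proof (Rmax_r (M+1) (d/2)).
      repeat split; try lra.
      specialize (P (d/2) (Rmax (M+1) (d/2)) ltac:(lra) ltac:(lra) ltac:(lra)).
      apply Rabs_def2 in P. lra.
  - apply not_ex_all_not with (n := - c) in HB.
    apply not_all_ex_not in HB. destruct HB as [a HB].
    apply not_all_ex_not in HB. destruct HB as [b HB].
    apply imply_to_and in HB. destruct HB as [Ha HB].
    apply imply_to_and in HB. destruct HB as [Hab HB].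
    exists a, b. repeat split; auto. lra.
Qed.

Lemma psi_large : forall q k, 0 <= k -> forall T, exists th, T < th /\ q <= psiY c s Pbar th + k * th.
Proof.
  intros q k Hk T.
  assert (Hs0 : 0 <= s) by (destruct HL; auto).
  destruct (Req_dec s 0) as [Hs|Hs].
  - destruct (exists_pos_mass Hs) as [a [b [Ha [Hab Hm]]]].
    set (P := RInt Pbar a b). set (eta := c + P).
    assert (Heta : 0 < eta) by (unfold eta, P; lra).
    assert (HP : 0 <= P).
    { apply RInt_ge0; auto. apply Pbar_int; auto. intros; apply Pbar_nonneg; lra. }
    set (th := Rmax (Rmax (T + 1) 1) (Rmax (2 * P / (a * eta) + 1) (2 * Rabs q / eta + 1))).
    assert (Ht1 : T + 1 <= th) by (unfold th; eapply Rle_trans; [apply Rmax_l|apply Rmax_l]).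
    assert (Ht2 : 1 <= th) by (unfold th; eapply Rle_trans; [apply Rmax_r|apply Rmax_l]).
    assert (Ht3 : 2 * P / (a * eta) + 1 <= th) by (unfold th; eapply Rle_trans; [apply Rmax_l|apply Rmax_r]).
    assert (Ht4 : 2 * Rabs q / eta + 1 <= th) by (unfold th; eapply Rle_trans; [apply Rmax_r|apply Rmax_r]).
    exists th. split; [lra|].
    pose proof (psi_lower th a b ltac:(lra) Ha Hab) as Hl. fold P in Hl. rewrite Hs in Hl.
    assert (He : exp (- (th * a)) * P <= eta / 2).
    { assert (E1 : exp (- (th * a)) * exp (th * a) = 1).
      { rewrite <- exp_plus. replace (- (th * a) + th * a) with 0 by ring. apply exp_0. }
      pose proof (exp_gt_id (th * a)). pose proof (exp_pos (- (th * a))).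
      assert (Hta : 2 * P / eta <= th * a).
      { assert (Z1 : 2 * P / (a * eta) <= th) by lra.
        apply (Rmult_le_compat_r a) in Z1; [|lra].
        replace (2 * P / (a * eta) * a) with (2 * P / eta) in Z1 by fsolve. lra. }
      assert (H2 : 2 * P <= eta * (th * a)).
      { apply (Rmult_le_compat_r eta) in Hta; [|lra].
        replace (2 * P / eta * eta) with (2 * P) in Hta by fsolve. lra. }
      assert (H3 : exp (- (th * a)) * (2 * P) <= exp (- (th * a)) * (eta * exp (th * a))).
      { apply Rmult_le_compat_l; [lra|]. nra. }
      replace (exp (- (th * a)) * (eta * exp (th * a))) with (eta * (exp (- (th * a)) * exp (th * a))) in H3 by ring.
      rewrite E1 in H3. lra. }
    assert (Hq : Rabs q <= th * eta / 2).
    { assert (H : 2 * Rabs q / eta <= th) by lra.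
      apply (Rmult_le_compat_r eta) in H; [|lra].
      replace (2 * Rabs q / eta * eta) with (2 * Rabs q) in H by fsolve. lra. }
    pose proof (Rle_abs q).
    assert (th * (eta / 2) <= th * (c + (1 - exp (- (th * a))) * P)).
    { apply Rmult_le_compat_l; [lra|]. unfold eta in *. lra. }
    assert (0 <= k * th) by (apply Rmult_le_pos; lra).
    assert (Eq : c * th + 0 * th ^ 2 / 2 + th * (1 - exp (- (th * a))) * P =
      th * (c + (1 - exp (- (th * a))) * P)) by field.
    rewrite Hs. lra.
  - assert (Hs' : 0 < s) by lra.
    set (th := Rmax (Rmax (T + 1) 1) (2 * (Rabs c + Rabs q) / s + 1)).
    assert (Ht1 : T + 1 <= th) by (unfold th; eapply Rle_trans; [apply Rmax_l|apply Rmax_l]).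
    assert (Ht2 : 1 <= th) by (unfold th; eapply Rle_trans; [apply Rmax_r|apply Rmax_l]).
    assert (Ht3 : 2 * (Rabs c + Rabs q) / s + 1 <= th) by (unfold th; apply Rmax_r).
    exists th; split; [lra|].
    pose proof (psi_lower th 1 1 ltac:(lra) ltac:(lra) ltac:(lra)) as Hl.
    rewrite RInt_aa in Hl.
    assert (H2 : 2 * (Rabs c + Rabs q) <= s * th).
    { assert (H : 2 * (Rabs c + Rabs q) / s <= th) by lra.
      apply (Rmult_le_compat_r s) in H; [|lra].
      replace (2 * (Rabs c + Rabs q) / s * s) with (2 * (Rabs c + Rabs q)) in H by fsolve. lra. }
    pose proof (Rle_abs q). pose proof (Rle_abs (- c)) as H0. rewrite Rabs_Ropp in H0.
    assert (0 <= k * th) by (apply Rmult_le_pos; lra).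
    assert (th * (Rabs c + Rabs q) <= th * (s * th / 2)) by (apply Rmult_le_compat_l; lra).
    assert (Rabs q <= th * Rabs q) by (pose proof (Rabs_pos q); nra).
    assert (- (th * Rabs c) <= c * th) by (pose proof (Rabs_pos c); nra).
    assert (Eq : s * th ^ 2 / 2 = th * (s * th / 2)) by field.
    lra.
Qed.

End Psi.

Module CQ2.
Import Coquelicot.Coquelicot.
Definition isR (f : R -> R) (a b I : R) : Prop := is_RInt (V := R_NormedModule) f a b I.

Lemma L1 : forall h A B, Riemann_integrable h A B -> isR h A B (Defs.RInt h A B).
Proof.
  intros h A B p. unfold isR. rewrite (RInt_pr p). rewrite <- RInt_Reals.
  pose proof (RInt_correct (V := R_CompleteNormedModule) h A B (ex_RInt_Reals_1 _ _ _ p)) as HH.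
  exact HH.
Qed.

Lemma L2 : forall h A B I, isR h A B I -> isR h B A (- I).
Proof. intros. unfold isR in *. pose proof (is_RInt_swap (V := R_NormedModule) _ _ _ _ H) as HH. exact HH. Qed.

Lemma L3 : forall h u v a b I, isR h (u * a + v) (u * b + v) I -> isR (fun y => u * h (u * y + v)) a b I.
Proof. intros. unfold isR in *. pose proof (is_RInt_comp_lin (V := R_NormedModule) h u v a b _ H) as HH. exact HH. Qed.

Lemma L4 : forall f a b k I, isR f a b I -> isR (fun y => k * f y) a b (k * I).
Proof. intros. unfold isR in *. pose proof (is_RInt_scal (V := R_NormedModule) _ _ _ k _ H) as HH. exact HH. Qed.

Lemma L5 : forall f g a b I, (forall x, f x = g x) -> isR f a b I -> isR g a b I.
Proof.
  intros. unfold isR in *. eapply (is_RInt_ext (V := R_NormedModule)); [|exact H0].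
  intros; apply H.
Qed.

Lemma L6 : forall f a b I, isR f a b I -> {pr : Riemann_integrable f a b | RiemannInt pr = I}.
Proof.
  intros f a b I H. unfold isR in H.
  assert (Hg : ex_RInt f a b) by (eexists; exact H).
  exists (ex_RInt_Reals_0 _ _ _ Hg).
  rewrite <- RInt_Reals. apply is_RInt_unique. exact H.
Qed.
End CQ2.

Lemma reflect_aux : forall h b a1 a2, Riemann_integrable h (b - a2) (b - a1) ->
  { pr : Riemann_integrable (fun t => h (b - t)) a1 a2 |
     RiemannInt pr = RInt h (b - a2) (b - a1) }.
Proof.
  intros h b a1 a2 p.
  pose proof (CQ2.L2 _ _ _ _ (CQ2.L1 _ _ _ p)) as H2.
  replace (b - a1) with (-1 * a1 + b) in H2 by ring.
  replace (b - a2) with (-1 * a2 + b) in H2 by ring.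
  pose proof (CQ2.L4 _ _ _ (-1) _ (CQ2.L3 _ _ _ _ _ _ H2)) as H3.
  replace (-1 * - RInt h (-1 * a2 + b) (-1 * a1 + b)) with (RInt h (b - a2) (b - a1)) in H3.
  2:{ replace (-1 * a2 + b) with (b - a2) by ring. replace (-1 * a1 + b) with (b - a1) by ring. ring. }
  apply CQ2.L6. eapply CQ2.L5; [|exact H3]. intros y. simpl.
  replace (-1 * y + b) with (b - y) by ring. ring.
Qed.

Lemma reflect_int : forall h b a1 a2, Riemann_integrable h (b - a2) (b - a1) ->
  Riemann_integrable (fun t => h (b - t)) a1 a2.
Proof. intros. destruct (reflect_aux h b a1 a2); auto. Qed.

Lemma reflect_RInt : forall h b a1 a2, Riemann_integrable h (b - a2) (b - a1) ->
  RInt (fun t => h (b - t)) a1 a2 = RInt h (b - a2) (b - a1).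
Proof.
  intros. destruct (reflect_aux h b a1 a2) as [pr Hpr]; auto. rewrite (RInt_pr pr); auto.
Qed.

Section ZSec.
Variables (W : R -> R) (q : R).
Hypothesis Hq : 0 < q.
Hypothesis HW0 : forall x, 0 <= x -> 0 <= W x.
Hypothesis Hinc : forall x y, 0 <= x -> x < y -> W x < W y.

Lemma W_nondecr : forall a b, 0 <= a -> nondecr_on W a b.
Proof.
  intros a b Ha x y Hx Hxy Hy. destruct (Req_dec x y) as [->|Hn]; [lra|].
  left; apply Hinc; lra.
Qed.

Lemma W_int : forall a b, 0 <= a -> a <= b -> Riemann_integrable W a b.
Proof. intros. apply nondecr_integrable; auto. apply W_nondecr; auto. Qed.

Lemma Zq_diff : forall x y, 0 <= x -> x <= y -> Zq W q y - Zq W q x = q * RInt W x y.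
Proof.
  intros x y Hx Hxy. unfold Zq.
  rewrite <- (RInt_chasles W 0 x y) by (apply W_int; lra). ring.
Qed.

Lemma Zq_0 : Zq W q 0 = 1.
Proof. unfold Zq. rewrite RInt_aa. ring. Qed.

Lemma Zq_mono : forall x y, 0 <= x -> x <= y -> Zq W q x <= Zq W q y.
Proof.
  intros x y Hx Hxy. pose proof (Zq_diff x y Hx Hxy).
  assert (0 <= RInt W x y) by (apply RInt_ge0; auto; [apply W_int; lra| intros; apply HW0; lra]).
  nra.
Qed.

Lemma Zq_ge1 : forall x, 0 <= x -> 1 <= Zq W q x.
Proof. intros. rewrite <- Zq_0. apply Zq_mono; lra. Qed.

Lemma Zq_gt1 : forall x, 0 < x -> 1 < Zq W q x.
Proof.
  intros x Hx. rewrite <- Zq_0. rewrite <- (Rplus_0_r (Zq W q 0)).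
  replace (Zq W q x) with (Zq W q 0 + (Zq W q x - Zq W q 0)) by ring.
  apply Rplus_lt_compat_l. rewrite Zq_diff by lra.
  apply Rmult_lt_0_compat; auto.
  rewrite <- (RInt_chasles W 0 (x/2) x) by (apply W_int; lra).
  assert (0 <= RInt W 0 (x/2)) by (apply RInt_ge0; [lra|apply W_int; lra| intros; apply HW0; lra]).
  assert (W (x/2) * (x - x/2) <= RInt W (x/2) x).
  { apply RInt_lower; [lra|apply W_int; lra|]. intros y Hy. left; apply Hinc; lra. }
  assert (0 < W (x/2)) by (pose proof (Hinc 0 (x/2) ltac:(lra) ltac:(lra)); pose proof (HW0 0 ltac:(lra)); lra).
  assert (0 < W (x/2) * (x - x/2)) by (apply Rmult_lt_0_compat; lra).
  lra.
Qed.

Lemma Zq_lip : forall x y K, 0 <= x -> x <= y -> y <= K -> Zq W q y - Zq W q x <= q * W K * (y - x).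
Proof.
  intros x y K Hx Hxy HyK. rewrite Zq_diff by lra. rewrite Rmult_assoc.
  apply Rmult_le_compat_l; [lra|]. apply RInt_upper; [lra|apply W_int; lra|].
  intros z Hz. apply (W_nondecr 0 K (Rle_refl 0)); lra.
Qed.

Lemma Zq_cont : forall x, 0 <= x -> forall e, 0 < e -> exists d, 0 < d /\
  forall y, 0 <= y -> Rabs (y - x) < d -> Rabs (Zq W q y - Zq W q x) < e.
Proof.
  intros x Hx e He.
  set (C := q * W (x + 1) + 1).
  assert (HC : 0 < C) by (unfold C; pose proof (HW0 (x+1) ltac:(lra)); nra).
  exists (Rmin 1 (e / C)). split.
  { apply Rmin_glb_lt; [lra|]. apply Rdiv_lt_0_compat; lra. }
  intros y Hy Hd. pose proof (Rmin_l 1 (e/C)). pose proof (Rmin_r 1 (e/C)).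
  assert (HW1 : 0 <= W (x+1)) by (apply HW0; lra).
  assert (Hb : Rabs (y - x) * C < e).
  { apply Rlt_le_trans with ((e / C) * C).
    - apply Rmult_lt_compat_r; lra.
    - right; field; lra. }
  destruct (Rle_dec x y).
  - pose proof (Zq_lip x y (x+1) Hx r ltac:(apply Rabs_def2 in Hd; lra)).
    pose proof (Zq_mono x y Hx r).
    rewrite Rabs_right by lra. rewrite Rabs_right in Hb by lra. unfold C in Hb.
    assert (q * W (x + 1) * (y - x) <= (y - x) * (q * W (x + 1) + 1)) by nra. lra.
  - pose proof (Zq_lip y x (x+1) Hy ltac:(lra) ltac:(lra)).
    pose proof (Zq_mono y x Hy ltac:(lra)).
    rewrite Rabs_left1 by lra. rewrite Rabs_left1 in Hb by lra. unfold C in Hb.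
    assert (q * W (x + 1) * (x - y) <= - (y - x) * (q * W (x + 1) + 1)) by nra. lra.
Qed.

Lemma Z_int : forall a b, 0 <= a -> a <= b -> Riemann_integrable (Zq W q) a b.
Proof.
  intros. apply nondecr_integrable; auto. intros x y Hx Hxy Hy. apply Zq_mono; lra.
Qed.

Lemma Zbar_ge : forall b, 0 <= b -> b <= Zbarq W q b.
Proof.
  intros b Hb. unfold Zbarq. replace b with (1 * (b - 0)) at 1 by ring.
  apply RInt_lower; auto. apply Z_int; lra. intros; apply Zq_ge1; lra.
Qed.

Lemma Zbar_le : forall b, 0 <= b -> Zbarq W q b <= b * Zq W q b.
Proof.
  intros b Hb. unfold Zbarq. replace (b * Zq W q b) with (Zq W q b * (b - 0)) by ring.
  apply RInt_upper; auto. apply Z_int; lra. intros; apply Zq_mono; lra.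
Qed.

End ZSec.

Section GSec.
Variables (WW W : R -> R) (q delta rho dX beta : R).
Hypothesis Hq : 0 < q.
Hypothesis Hd : 0 < delta.
Hypothesis Hb : 0 < beta.
Hypothesis HW0 : forall x, 0 <= x -> 0 <= W x.
Hypothesis Hinc : forall x y, 0 <= x -> x < y -> W x < W y.
Hypothesis HWW0 : forall x, 0 <= x -> 0 <= WW x.
Hypothesis HWinc : forall x y, 0 <= x -> x < y -> WW x < WW y.

Notation Gm := (Gamma WW W q delta rho dX beta).
Notation Z := (Zq W q).

Lemma Gamma_00 : Gm 0 0 = delta - q * rho - beta * dX.
Proof.
  unfold Gamma, rtilde, Rq, Zbarq. rewrite Zq_0 by auto. rewrite Rminus_0_r, !RInt_aa.
  field. lra.
Qed.

Lemma Gamma_0b : forall b, Gm 0 b = delta - q * rho - beta * dX - q * beta * Zbarq W q b.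
Proof.
  intros b. unfold Gamma, rtilde, Rq. rewrite Zq_0 by auto. rewrite Rminus_0_r, !RInt_aa.
  field. lra.
Qed.

Definition hh (b : R) := fun y => WW (b - y) * Z y.
Definition gg (b : R) := fun t => WW t * (1 - beta * Z (b - t)).

Lemma hh_int : forall a b, 0 <= a -> a <= b -> Riemann_integrable (hh b) (b - a) b.
Proof.
  intros a b Ha Hab. unfold hh.
  apply (prod_int1 (fun y => WW (b - y)) Z); try lra.
  - intros x y Hx Hxy Hy. apply (W_nondecr WW HWinc 0 b (Rle_refl 0)); lra.
  - intros x y Hx Hxy Hy. apply Zq_mono; auto; lra.
  - intros; apply HWW0; lra.
  - intros; pose proof (Zq_ge1 W q Hq HW0 Hinc x ltac:(lra)); lra.
Qed.

Lemma WZ_int : forall a1 a2 b, 0 <= a1 -> a1 <= a2 -> a2 <= b ->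
  Riemann_integrable (fun t => WW t * Z (b - t)) a1 a2.
Proof.
  intros a1 a2 b H1 H2 H3.
  assert (P : Riemann_integrable (hh b) (b - a2) (b - a1)).
  { apply (int_sub _ (b - a2) b); try lra. apply hh_int; lra. }
  apply (int_ext (fun t => hh b (b - t))); auto.
  - intros x Hx. unfold hh. replace (b - (b - x)) with x by ring. reflexivity.
  - apply reflect_int; auto.
Qed.

Lemma gg_int : forall a1 a2 b, 0 <= a1 -> a1 <= a2 -> a2 <= b ->
  Riemann_integrable (gg b) a1 a2.
Proof.
  intros. unfold gg.
  apply (int_ext (fun t => WW t + (- beta) * (WW t * Z (b - t)))); auto.
  - intros; ring.
  - apply RiemannInt_P10. apply W_int; auto. apply WZ_int; auto.
Qed.

Lemma Gamma_diff : forall a1 a2 b, 0 <= a1 -> a1 <= a2 -> a2 <= b ->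
  Gm a2 b - Gm a1 b = delta * q * RInt (gg b) a1 a2.
Proof.
  intros a1 a2 b H1 H2 H3.
  assert (E1 : Zq WW q a2 - Zq WW q a1 = q * RInt WW a1 a2) by (apply Zq_diff; auto).
  assert (P1 : Riemann_integrable (hh b) (b - a2) (b - a1)).
  { apply (int_sub _ (b - a2) b); try lra. apply hh_int; lra. }
  assert (P2 : Riemann_integrable (hh b) (b - a1) b).
  { apply (int_sub _ (b - a2) b); try lra. apply hh_int; lra. }
  assert (E2 : RInt (hh b) (b - a2) b - RInt (hh b) (b - a1) b = RInt (hh b) (b - a2) (b - a1)).
  { rewrite <- (RInt_chasles (hh b) (b - a2) (b - a1) b P1 P2). ring. }
  assert (E3 : RInt (hh b) (b - a2) (b - a1) = RInt (fun t => WW t * Z (b - t)) a1 a2).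
  { rewrite <- reflect_RInt by auto. apply RInt_ext; auto.
    intros x Hx. unfold hh. replace (b - (b - x)) with x by ring. reflexivity. }
  assert (E4 : RInt (gg b) a1 a2 = RInt WW a1 a2 + (- beta) * RInt (fun t => WW t * Z (b - t)) a1 a2).
  { rewrite <- RInt_lin.
    - apply RInt_ext; auto. intros; unfold gg; ring.
    - apply W_int; auto.
    - apply WZ_int; auto. }
  unfold Gamma, rtilde.
  change (fun y => WW (b - y) * Zq W q y) with (hh b).
  assert (Gm a2 b - Gm a1 b = delta * (Zq WW q a2 - Zq WW q a1) -
     q * beta * delta * (RInt (hh b) (b - a2) b - RInt (hh b) (b - a1) b)).
  { unfold Gamma, rtilde. change (fun y => WW (b - y) * Zq W q y) with (hh b). ring. }
  unfold Gamma, rtilde in H. change (fun y => WW (b - y) * Zq W q y) with (hh b) in H.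
  rewrite H, E1, E2, E3, E4. ring.
Qed.

Lemma Z_bt : forall b t s, 0 <= b - s -> t <= s -> Z (b - s) <= Z (b - t).
Proof. intros. apply Zq_mono; auto; lra. Qed.

Lemma Gweak : forall a1 a2 b, 0 <= a1 -> a1 <= a2 -> a2 <= b ->
  beta * Z (b - a1) <= 1 -> Gm a1 b <= Gm a2 b.
Proof.
  intros a1 a2 b H1 H2 H3 H4.
  pose proof (Gamma_diff a1 a2 b H1 H2 H3).
  assert (0 <= RInt (gg b) a1 a2).
  { apply RInt_ge0; auto. apply gg_int; auto. intros t Ht. unfold gg.
    apply Rmult_le_pos; [apply HWW0; lra|].
    pose proof (Z_bt b a1 t ltac:(lra) ltac:(lra)). nra. }
  assert (0 <= delta * q * RInt (gg b) a1 a2) by (apply Rmult_le_pos; [nra|auto]).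
  lra.
Qed.

Lemma Gpos : forall a1 a2 b, 0 <= a1 -> a1 < a2 -> a2 <= b ->
  beta * Z (b - a1) < 1 -> Gm a1 b < Gm a2 b.
Proof.
  intros a1 a2 b H1 H2 H3 H4.
  pose proof (Gamma_diff a1 a2 b H1 ltac:(lra) H3).
  set (m := 1 - beta * Z (b - a1)).
  set (mid := (a1 + a2) / 2).
  assert (Hmid : 0 < WW mid).
  { pose proof (HWinc 0 mid ltac:(lra) ltac:(unfold mid; lra)). pose proof (HWW0 0 ltac:(lra)). lra. }
  assert (Hg : forall t, a1 <= t <= a2 -> m <= 1 - beta * Z (b - t)).
  { intros t Ht. pose proof (Z_bt b a1 t ltac:(lra) ltac:(lra)). unfold m. nra. }
  assert (P1 : Riemann_integrable (gg b) a1 mid) by (apply gg_int; unfold mid; lra).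
  assert (P2 : Riemann_integrable (gg b) mid a2) by (apply gg_int; unfold mid; lra).
  rewrite <- (RInt_chasles (gg b) a1 mid a2 P1 P2) in H.
  assert (0 <= RInt (gg b) a1 mid).
  { apply RInt_ge0; auto; [unfold mid; lra|]. intros t Ht. unfold gg.
    apply Rmult_le_pos; [apply HWW0; lra|]. pose proof (Hg t ltac:(unfold mid in *; lra)). unfold m in *; lra. }
  assert (WW mid * m * (a2 - mid) <= RInt (gg b) mid a2).
  { apply RInt_lower; auto; [unfold mid; lra|]. intros t Ht. unfold gg.
    pose proof (Hg t ltac:(unfold mid in *; lra)).
    assert (WW mid <= WW t) by (left; apply HWinc; unfold mid in *; lra).
    apply Rmult_le_compat; unfold m in *; lra. }
  assert (0 < WW mid * m * (a2 - mid)).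
  { apply Rmult_lt_0_compat; [apply Rmult_lt_0_compat|]; unfold m, mid in *; lra. }
  assert (0 < delta * q * (RInt (gg b) a1 mid + RInt (gg b) mid a2)).
  { apply Rmult_lt_0_compat; [nra|lra]. }
  lra.
Qed.

Lemma Gneg : forall a1 a2 b, 0 <= a1 -> a1 < a2 -> a2 <= b ->
  1 < beta * Z (b - a2) -> Gm a2 b < Gm a1 b.
Proof.
  intros a1 a2 b H1 H2 H3 H4.
  pose proof (Gamma_diff a1 a2 b H1 ltac:(lra) H3).
  set (m := beta * Z (b - a2) - 1).
  set (mid := (a1 + a2) / 2).
  assert (Hmid : 0 < WW mid).
  { pose proof (HWinc 0 mid ltac:(lra) ltac:(unfold mid; lra)). pose proof (HWW0 0 ltac:(lra)). lra. }
  assert (Hg : forall t, a1 <= t <= a2 -> 1 - beta * Z (b - t) <= - m).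
  { intros t Ht. pose proof (Z_bt b t a2 ltac:(lra) ltac:(lra)). unfold m. nra. }
  assert (P1 : Riemann_integrable (gg b) a1 mid) by (apply gg_int; unfold mid; lra).
  assert (P2 : Riemann_integrable (gg b) mid a2) by (apply gg_int; unfold mid; lra).
  rewrite <- (RInt_chasles (gg b) a1 mid a2 P1 P2) in H.
  assert (RInt (gg b) a1 mid <= 0 * (mid - a1)).
  { apply RInt_upper; auto; [unfold mid; lra|]. intros t Ht. unfold gg.
    pose proof (Hg t ltac:(unfold mid in *; lra)). pose proof (HWW0 t ltac:(lra)).
    assert (0 <= WW t * (beta * Z (b - t) - 1)) by (apply Rmult_le_pos; unfold m in *; lra).
    nra. }
  assert (RInt (gg b) mid a2 <= (- (WW mid * m)) * (a2 - mid)).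
  { apply RInt_upper; auto; [unfold mid; lra|]. intros t Ht. unfold gg.
    pose proof (Hg t ltac:(unfold mid in *; lra)).
    assert (WW mid <= WW t) by (left; apply HWinc; unfold mid in *; lra).
    assert (WW mid * m <= WW t * (beta * Z (b - t) - 1)) by (apply Rmult_le_compat; unfold m in *; lra).
    nra. }
  assert (0 < WW mid * m * (a2 - mid)).
  { apply Rmult_lt_0_compat; [apply Rmult_lt_0_compat|]; unfold m, mid in *; lra. }
  assert (RInt (gg b) a1 mid + RInt (gg b) mid a2 < 0) by lra.
  assert (delta * q * (RInt (gg b) a1 mid + RInt (gg b) mid a2) < 0).
  { assert (0 < delta * q) by nra. nra. }
  lra.
Qed.

End GSec.

Theorem mainTheorem11
  (c s : R) (Pbar : R -> R) (q delta rho dY : R) (WW W : R -> R)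
  (astar bstar : R -> R) :
  LevyTriplet c s Pbar ->
  NotSubordinator c s Pbar ->
  0 < q -> 0 < delta ->
  RightDeriv0 (psiY c s Pbar) dY ->
  ScaleFun (psiY c s Pbar) q WW ->
  ScaleFun (fun theta => psiY c s Pbar theta + delta * theta) q W ->
  (forall beta, 0 < beta < 1 ->
     Selected (Gamma WW W q delta rho (dY + delta) beta) (astar beta) (bstar beta)) ->
  (* 1 *)
  (dY + q * rho < 0 ->
     NearOne (fun beta => 0 < astar beta < bstar beta /\
                          Zq W q (bstar beta - astar beta) = / beta) /\
     TendsTo0At1 (fun beta => bstar beta - astar beta)) /\
  (* 2 *)
  (dY + q * rho > 0 ->
     NearOne (fun beta => astar beta = 0 /\ bstar beta = 0)) /\
  (* 3 *)
  (dY + q * rho = 0 -> dY + delta > 0 ->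
     (forall beta, 0 < beta < 1 -> 0 < bstar beta) /\
     TendsTo0At1 astar /\ TendsTo0At1 bstar) /\
  (* 4 *)
  (dY + q * rho = 0 -> dY + delta <= 0 ->
     forall beta, 0 < beta < 1 -> astar beta = 0 /\ bstar beta = 0).
Proof.
  intros HL HNS Hq Hd _ HSWW HSW Hsel.
  assert (HWWpos : 0 <= WW 0).
  { apply (scale_W0 (psiY c s Pbar) q WW HSWW). intros T.
    destruct (psi_large c s Pbar HL HNS q 0 (Rle_refl 0) T) as [th [H1 H2]].
    exists th; split; auto. lra. }
  assert (HWpos : 0 <= W 0).
  { apply (scale_W0 _ q W HSW). intros T.
    apply (psi_large c s Pbar HL HNS q delta ltac:(lra) T). }
  destruct HSWW as (_ & _ & HWWinc & _).
  destruct HSW as (_ & _ & HWinc & _).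
  assert (HWW0 : forall x, 0 <= x -> 0 <= WW x).
  { intros x Hx. destruct (Req_dec x 0) as [->|Hn]; auto.
    pose proof (HWWinc 0 x (Rle_refl 0) ltac:(lra)). lra. }
  assert (HW0 : forall x, 0 <= x -> 0 <= W x).
  { intros x Hx. destruct (Req_dec x 0) as [->|Hn]; auto.
    pose proof (HWinc 0 x (Rle_refl 0) ltac:(lra)). lra. }
  set (dX := dY + delta) in *.
  assert (G00 : forall beta, Gamma WW W q delta rho dX beta 0 0 = delta - q * rho - beta * dX)
    by (intros; apply Gamma_00; auto).
  assert (G0b : forall beta b, Gamma WW W q delta rho dX beta 0 b =
            delta - q * rho - beta * dX - q * beta * Zbarq W q b)
    by (intros; apply Gamma_0b; auto).
  assert (Zmono : forall x y, 0 <= x -> x <= y -> Zq W q x <= Zq W q y)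
    by (intros; apply Zq_mono; auto).
  split; [|split; [|split]].
  - intros Hneg. set (kap := - (dY + q * rho)).
    assert (Hkap : 0 < kap) by (unfold kap; lra).
    set (b0 := kap / (2 * q)).
    assert (Hb0 : 0 < b0) by (unfold b0; apply Rdiv_lt_0_compat; lra).
    assert (HZb0 : 1 < Zq W q b0) by (apply Zq_gt1; auto).
    set (beta1 := 1 - kap / (2 * (Rabs dX + 1))).
    assert (Hbeta1 : beta1 < 1).
    { unfold beta1. assert (0 < kap / (2 * (Rabs dX + 1))); [|lra].
      apply Rdiv_lt_0_compat; [lra|]. pose proof (Rabs_pos dX); lra. }
    set (beta2 := / Zq W q b0).
    assert (Hbeta2 : beta2 < 1) by (unfold beta2; rewrite <- Rinv_1; apply Rinv_lt_contravar; lra).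
    set (beta0 := Rmax (/2) (Rmax beta1 beta2)).
    assert (Hb0a : / 2 <= beta0) by apply Rmax_l.
    assert (Hb0b : beta1 <= beta0) by (eapply Rle_trans; [apply Rmax_l|apply Rmax_r]).
    assert (Hb0c : beta2 <= beta0) by (eapply Rle_trans; [apply Rmax_r|apply Rmax_r]).
    assert (Hb0d : beta0 < 1).
    { unfold beta0. apply Rmax_lub_lt; [lra|]. apply Rmax_lub_lt; lra. }
    assert (Core : forall beta, beta0 < beta < 1 ->
        0 < astar beta < bstar beta /\ beta * Zq W q (bstar beta - astar beta) = 1).
    { intros beta Hbeta.
      assert (Hbp : 0 < beta) by lra.
      assert (HG00 : kap / 2 <= delta - q * rho - beta * dX).
      { assert (Habs : (1 - beta) * (- dX) <= (1 - beta) * Rabs dX)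
          by (apply Rmult_le_compat_l; [lra| rewrite <- Rabs_Ropp; apply Rle_abs]).
        assert ((1 - beta) * Rabs dX <= kap / 2).
        { assert (Hlt : 1 - beta < kap / (2 * (Rabs dX + 1))) by (unfold beta1 in *; lra).
          pose proof (Rabs_pos dX).
          apply Rmult_lt_compat_r with (r := Rabs dX + 1) in Hlt; [|lra].
          replace (kap / (2 * (Rabs dX + 1)) * (Rabs dX + 1)) with (kap / 2) in Hlt by (field; lra).
          nra. }
        unfold dX, kap in *. lra. }
      destruct (Hsel beta ltac:(lra)) as [[Hle _] | [Hpos [Hbs [[[a0 [Ha0 Hz]] Hmin] [_ [Has [Hamin _]]]]]]].
      { rewrite G00 in Hle. lra. }
      set (b := bstar beta) in *. set (a := astar beta) in *.
      set (Gm := Gamma WW W q delta rho dX beta) in *.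
      assert (ClA : 1 < beta * Zq W q b).
      { apply Rnot_le_lt; intro HA.
        assert (Hw : forall x, 0 <= x <= b -> Gm 0 b <= Gm x b).
        { intros x Hx. apply Gweak; auto; try lra. rewrite Rminus_0_r; auto. }
        pose proof (Hmin 0 ltac:(lra)). pose proof (Hw a0 Ha0).
        assert (HG0 : Gm 0 b = 0) by lra.
        unfold Gm in HG0. rewrite G0b in HG0.
        pose proof (Zbar_le W q Hq HW0 HWinc b ltac:(lra)).
        assert (q * beta * Zbarq W q b <= q * (beta * (b * Zq W q b))).
        { replace (q * beta * Zbarq W q b) with (q * (beta * Zbarq W q b)) by ring.
          apply Rmult_le_compat_l; [lra|]. apply Rmult_le_compat_l; lra. }
        assert (beta * (b * Zq W q b) <= b) by nra.
        assert (kap / 2 <= q * b) by nra.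
        assert (Hbb : b0 <= b).
        { unfold b0. apply (Rmult_le_reg_l (2 * q)); [lra|].
          replace (2 * q * (kap / (2 * q))) with kap by (field; lra). lra. }
        pose proof (Zmono b0 b ltac:(lra) Hbb).
        assert (beta2 * Zq W q b0 = 1) by (unfold beta2; field; lra).
        assert (beta2 * Zq W q b0 < beta * Zq W q b0) by (apply Rmult_lt_compat_r; lra).
        nra. }
      assert (Hab : a <= b) by lra.
      assert (Ha0' : 0 <= a) by lra.
      assert (ClB : beta * Zq W q (b - a) = 1).
      { destruct (Rtotal_order (beta * Zq W q (b - a)) 1) as [Hlt | [Heq | Hgt]]; auto.
        -
          assert (Hapos : 0 < a).
          { destruct (Req_dec a 0) as [E|E]; [|lra].
            rewrite E, Rminus_0_r in Hlt. lra. }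
          set (e := (1 - beta * Zq W q (b - a)) / beta).
          assert (He : 0 < e) by (unfold e; apply Rdiv_lt_0_compat; lra).
          destruct (Zq_cont W q Hq HW0 HWinc (b - a) ltac:(lra) e He) as [d [Hdd Hc]].
          set (a1 := a - Rmin (d/2) a).
          assert (Hm1 : Rmin (d/2) a <= d/2) by apply Rmin_l.
          assert (Hm2 : Rmin (d/2) a <= a) by apply Rmin_r.
          assert (Hm3 : 0 < Rmin (d/2) a) by (apply Rmin_glb_lt; lra).
          assert (Hc1 : Rabs (Zq W q (b - a1) - Zq W q (b - a)) < e).
          { apply Hc; [unfold a1; lra|]. unfold a1.
            replace (b - (a - Rmin (d / 2) a) - (b - a)) with (Rmin (d/2) a) by ring.
            rewrite Rabs_right; lra. }
          apply Rabs_def2 in Hc1.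
          assert (beta * Zq W q (b - a1) < 1).
          { assert (Zq W q (b - a1) < Zq W q (b - a) + e) by lra.
            assert (beta * Zq W q (b - a1) < beta * (Zq W q (b - a) + e)) by (apply Rmult_lt_compat_l; lra).
            unfold e in H0. replace (beta * (Zq W q (b - a) + (1 - beta * Zq W q (b - a)) / beta)) with 1 in H0 by (field; lra).
            lra. }
          pose proof (Gpos WW W q delta rho dX beta Hq Hd Hbp HW0 HWinc HWW0 HWWinc a1 a b
                        ltac:(unfold a1; lra) ltac:(unfold a1; lra) Hab H).
          pose proof (Hamin a1 ltac:(unfold a1; lra)). fold Gm in H0. lra.
        -
          assert (Hab' : a < b).
          { destruct (Req_dec a b) as [E|E]; [|lra].
            rewrite E, Rminus_diag, Zq_0 in Hgt. lra. }
          set (e := (beta * Zq W q (b - a) - 1) / beta).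
          assert (He : 0 < e) by (unfold e; apply Rdiv_lt_0_compat; lra).
          destruct (Zq_cont W q Hq HW0 HWinc (b - a) ltac:(lra) e He) as [d [Hdd Hc]].
          set (a2 := a + Rmin (d/2) (b - a)).
          assert (Hm1 : Rmin (d/2) (b - a) <= d/2) by apply Rmin_l.
          assert (Hm2 : Rmin (d/2) (b - a) <= b - a) by apply Rmin_r.
          assert (Hm3 : 0 < Rmin (d/2) (b - a)) by (apply Rmin_glb_lt; lra).
          assert (Hc1 : Rabs (Zq W q (b - a2) - Zq W q (b - a)) < e).
          { apply Hc; [unfold a2; lra|]. unfold a2.
            replace (b - (a + Rmin (d / 2) (b - a)) - (b - a)) with (- Rmin (d/2) (b - a)) by ring.
            rewrite Rabs_Ropp, Rabs_right; lra. }
          apply Rabs_def2 in Hc1.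
          assert (1 < beta * Zq W q (b - a2)).
          { assert (Zq W q (b - a) - e < Zq W q (b - a2)) by lra.
            assert (beta * (Zq W q (b - a) - e) < beta * Zq W q (b - a2)) by (apply Rmult_lt_compat_l; lra).
            unfold e in H0. replace (beta * (Zq W q (b - a) - (beta * Zq W q (b - a) - 1) / beta)) with 1 in H0 by (field; lra).
            lra. }
          pose proof (Gneg WW W q delta rho dX beta Hq Hd Hbp HW0 HWinc HWW0 HWWinc a a2 b
                        Ha0' ltac:(unfold a2; lra) ltac:(unfold a2; lra) H).
          pose proof (Hamin a2 ltac:(unfold a2; lra)). fold Gm in H0. lra. }
      split; auto. split.
      + destruct (Req_dec a 0) as [E|E]; [|lra].
        rewrite E, Rminus_0_r in ClB. lra.
      + destruct (Req_dec a b) as [E|E]; [|lra].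
        rewrite E, Rminus_diag, Zq_0 in ClB. lra. }
    split.
    + exists beta0. split; [lra|]. intros beta Hbeta.
      destruct (Core beta Hbeta) as [H1 H2]. split; auto.
      apply (Rmult_eq_reg_l beta); [|lra]. rewrite H2. field. lra.
    + intros eps Heps.
      assert (HZe : 1 < Zq W q (eps / 2)) by (apply Zq_gt1; auto; lra).
      set (beta3 := / Zq W q (eps / 2)).
      assert (Hbeta3 : beta3 < 1) by (unfold beta3; rewrite <- Rinv_1; apply Rinv_lt_contravar; lra).
      exists (1 - Rmax beta0 beta3). split.
      { pose proof (Rmax_lub_lt beta0 beta3 1 Hb0d Hbeta3). lra. }
      intros beta Hbeta.
      pose proof (Rmax_l beta0 beta3). pose proof (Rmax_r beta0 beta3).
      destruct (Core beta ltac:(lra)) as [H1 H2].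
      rewrite Rabs_right by lra.
      apply Rnot_le_lt; intro Hge.
      pose proof (Zmono (eps / 2) (bstar beta - astar beta) ltac:(lra) ltac:(lra)).
      assert (beta3 * Zq W q (eps / 2) = 1) by (unfold beta3; field; lra).
      assert (beta3 * Zq W q (eps / 2) < beta * Zq W q (eps / 2)) by (apply Rmult_lt_compat_r; lra).
      assert (beta * Zq W q (eps / 2) <= beta * Zq W q (bstar beta - astar beta)) by (apply Rmult_le_compat_l; lra).
      lra.
  - intros Hpos. set (kap := dY + q * rho).
    set (beta0 := Rmax (/2) (1 - kap / (Rabs dX + 1))).
    assert (Hk : 0 < kap / (Rabs dX + 1)) by (apply Rdiv_lt_0_compat; [unfold kap; lra | pose proof (Rabs_pos dX); lra]).
    exists beta0. split.
    { unfold beta0. split; [pose proof (Rmax_l (/2) (1 - kap / (Rabs dX + 1))); lra|].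
      apply Rmax_lub_lt; lra. }
    intros beta Hbeta. unfold beta0 in Hbeta.
    pose proof (Rmax_r (/2) (1 - kap / (Rabs dX + 1))). pose proof (Rmax_l (/2) (1 - kap / (Rabs dX + 1))).
    destruct (Hsel beta ltac:(lra)) as [[_ [Ha Hb]] | [Hp _]]; [auto|].
    exfalso. rewrite G00 in Hp.
    assert (Habs : (1 - beta) * dX <= (1 - beta) * Rabs dX)
      by (apply Rmult_le_compat_l; [lra|apply Rle_abs]).
    assert (Hlt : 1 - beta < kap / (Rabs dX + 1)) by lra.
    pose proof (Rabs_pos dX).
    apply Rmult_lt_compat_r with (r := Rabs dX + 1) in Hlt; [|lra].
    replace (kap / (Rabs dX + 1) * (Rabs dX + 1)) with kap in Hlt by (field; lra).
    assert ((1 - beta) * Rabs dX < kap) by nra.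
    unfold dX, kap in *. lra.
  - intros E HdX.
    assert (Key : forall beta, 0 < beta < 1 ->
       0 < bstar beta /\ 0 <= astar beta <= bstar beta /\ q * beta * bstar beta <= (1 - beta) * dX).
    { intros beta Hbeta.
      destruct (Hsel beta Hbeta) as [[Hle _] | [Hpos [Hbs [[_ Hmin] [_ [Has _]]]]]].
      { rewrite G00 in Hle. unfold dX in *. nra. }
      split; auto. split; auto.
      pose proof (Hmin 0 ltac:(lra)). rewrite G0b in H.
      pose proof (Zbar_ge W q Hq HW0 HWinc (bstar beta) ltac:(lra)).
      assert (q * beta * bstar beta <= q * beta * Zbarq W q (bstar beta))
        by (apply Rmult_le_compat_l; [nra|auto]).
      unfold dX in *. lra. }
    assert (Tb : TendsTo0At1 bstar).
    { intros eps Heps. exists (Rmin (1/2) (eps * q / (4 * (dX)))). split.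
      { apply Rmin_glb_lt; [lra|]. apply Rdiv_lt_0_compat; [nra|lra]. }
      intros beta Hbeta. pose proof (Rmin_l (1/2) (eps * q / (4 * dX))).
      pose proof (Rmin_r (1/2) (eps * q / (4 * dX))).
      destruct (Key beta ltac:(lra)) as [H1 [H2 H3]].
      rewrite Rabs_right by lra.
      assert (Hx : (1 - beta) * dX < eps * q / (4 * dX) * dX) by (apply Rmult_lt_compat_r; unfold dX in *; lra).
      replace (eps * q / (4 * dX) * dX) with (eps * q / 4) in Hx by (field; unfold dX in *; lra).
      assert (q * bstar beta / 2 <= q * beta * bstar beta).
      { replace (q * bstar beta / 2) with (q * bstar beta * (1/2)) by field.
        replace (q * beta * bstar beta) with (q * bstar beta * beta) by ring.
        apply Rmult_le_compat_l; [nra|lra]. }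
      assert (0 < q * eps) by nra.
      assert (q * bstar beta < q * eps) by lra.
      apply (Rmult_lt_reg_l q); lra. }
    split; [intros; apply Key; auto|]. split; auto.
    intros eps Heps. destruct (Tb eps Heps) as [eta [Heta Ht]]. exists (Rmin eta (1/2)); split.
    { apply Rmin_glb_lt; lra. }
    intros beta Hbeta. pose proof (Rmin_l eta (1/2)). pose proof (Rmin_r eta (1/2)).
    pose proof (Ht beta ltac:(lra)) as Hq0.
    destruct (Key beta ltac:(lra)) as [H1 [H2 H3]].
    rewrite Rabs_right in Hq0 by lra. rewrite Rabs_right by lra. lra.
  - intros E HdX beta Hbeta.
    destruct (Hsel beta Hbeta) as [[_ [Ha Hb]] | [Hp _]]; [auto|].
    exfalso. rewrite G00 in Hp. unfold dX in *. nra.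
Qed.
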